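(* Let $P=\operatorname{conv}(v_0,\ldots,v_d)\subseteq M_{\mathbb{R}}$ be a lattice $d$-simplex that is not unimodularly equivalent to the standard simplex $\Delta_d=\operatorname{conv}(0,e_1,\ldots,e_d)$. Then $\deg(P)\ge\nu_P$.
   Context: $M\cong\mathbb{Z}^d$ is a lattice. Two lattice polytopes are unimodularly equivalent if one is mapped to the other by an affine lattice automorphism of $M$. For a lattice $d$-polytope $P$, the Ehrhart series is $\sum_{k\ge0}|kP\cap M|t^k=h^*_P(t)/(1-t)^{d+1}$ with $h^*_P$ a polynomial of degree at most $d$; $\deg(P)$ is defined as the degree of $h^*_P$ (equivalently, $\deg(P)=d$ if $P$ has an interior lattice point, and otherwise $\deg(P)$ is the smallest $i\ge 0$ such that $kP$ has no interior lattice points for all $1\le k\le d-i$). With $\mathcal{V}$ the vertex set of $P$, $\nu_P$ is the smallest positive integer such that $(k+1)P\cap M=\mathcal{V}+(kP\cap M)$ for all $k\ge\nu_P$. *)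

(* Defs.v *)
From HB Require Import structures.
From mathcomp Require Import all_boot all_order all_algebra.
From Stdlib Require Import ClassicalEpsilon.
Set Implicit Arguments. Unset Strict Implicit. Unset Printing Implicit Defensive.
Import Order.TTheory GRing.Theory Num.Theory.
Local Open Scope ring_scope.

Definition decide (P : Prop) : bool :=
  if excluded_middle_informative P then true else false.

(* The lattice M = Z^d (row vectors); M_R is replaced by Q^d. *)
Definition intvec (d : nat) (x : 'rV[int]_d) : 'rV[rat]_d := map_mx intr x.

Definition in_kconv (d n : nat) (w : 'I_n -> 'rV[rat]_d) (k : rat) (x : 'rV[rat]_d)
  : Prop :=
  exists lam : 'I_n -> rat,
    (forall i, 0 <= lam i) /\ \sum_(i < n) lam i = k /\ x = \sum_(i < n) lam i *: w i.

Definition simplexP (d : nat) (v : 'I_d.+1 -> 'rV[int]_d) : 'rV[rat]_d -> Prop :=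
  in_kconv (fun i => intvec (v i)) 1.

Definition full_dim_simplex (d : nat) (v : 'I_d.+1 -> 'rV[int]_d) : Prop :=
  \det (\matrix_(i < d, j < d) (v (lift ord0 i) 0 j - v ord0 0 j)) != 0.

Definition std_vert (d : nat) (i : 'I_d.+1) : 'rV[rat]_d :=
  \row_(j < d) (if (i : nat) == j.+1 then 1 else 0).

Definition std_simplex (d : nat) : 'rV[rat]_d -> Prop := in_kconv (@std_vert d) 1.

Definition aff_map (d : nat) (U : 'M[int]_d) (t : 'rV[int]_d) (x : 'rV[rat]_d)
  : 'rV[rat]_d := x *m map_mx intr U + intvec t.

Definition unimod_equiv (d : nat) (P Q : 'rV[rat]_d -> Prop) : Prop :=
  exists (U : 'M[int]_d) (t : 'rV[int]_d), U \in unitmx /\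
    forall y, Q y <-> exists x, P x /\ y = aff_map U t x.

Definition in_kP (d : nat) (v : 'I_d.+1 -> 'rV[int]_d) (k : nat) (y : 'rV[int]_d)
  : Prop := in_kconv (fun i => intvec (v i)) k%:R (intvec y).

Definition vbound (d : nat) (v : 'I_d.+1 -> 'rV[int]_d) : nat :=
  (\max_(i < d.+1) \max_(j < d) absz (v i ord0 j))%N.

(* Box [-B,B]^d, B = k * vbound, contains kP; it is enumerated by a finType. *)
Definition box_emb (d B : nat) (x : 'rV['I_(B.*2).+1]_d) : 'rV[int]_d :=
  \row_(j < d) ((x 0 j : nat)%:Z - B%:Z).

Definition ehrhart (d : nat) (v : 'I_d.+1 -> 'rV[int]_d) (k : nat) : nat :=
  #|[pred x : 'rV['I_((k * vbound v).*2).+1]_d | decide (in_kP v k (box_emb x))]|.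

(* Coefficients of h*_P(t) = (1-t)^(d+1) * sum_k |kP ∩ M| t^k. *)
Definition hstar_coef (d : nat) (v : 'I_d.+1 -> 'rV[int]_d) (j : nat) : int :=
  \sum_(i < j.+1) (-1) ^+ i * ('C(d.+1, i))%:Z * (ehrhart v (j - i))%:Z.

(* h*_P as a polynomial (it has degree <= d by Ehrhart's theorem). *)
Definition hstar (d : nat) (v : 'I_d.+1 -> 'rV[int]_d) : {poly int} :=
  \poly_(j < d.+1) hstar_coef v j.

Definition ehrhart_deg (d : nat) (v : 'I_d.+1 -> 'rV[int]_d) : nat :=
  (size (hstar v)).-1.

Definition gen_from (d : nat) (v : 'I_d.+1 -> 'rV[int]_d) (n : nat) : Prop :=
  forall k : nat, (n <= k)%N -> forall y : 'rV[int]_d,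
    in_kP v k.+1 y <-> exists (i : 'I_d.+1) (x : 'rV[int]_d), in_kP v k x /\ y = v i + x.

Definition is_nu (d : nat) (v : 'I_d.+1 -> 'rV[int]_d) (n : nat) : Prop :=
  (0 < n)%N /\ gen_from v n /\ forall m : nat, (0 < m)%N -> gen_from v m -> (n <= m)%N.

(* Main.v *)
Require Import Defs.
From HB Require Import structures.
From mathcomp Require Import all_boot all_order all_algebra zify ring.
From Stdlib Require Import ClassicalEpsilon.
Set Implicit Arguments. Unset Strict Implicit. Unset Printing Implicit Defensive.
Import Order.TTheory GRing.Theory Num.Theory.
Local Open Scope ring_scope.

Definition wv d (v : 'I_d.+1 -> 'rV[int]_d) i : 'rV[rat]_d := intvec (v i).
Definition Aq d (v : 'I_d.+1 -> 'rV[int]_d) : 'M[rat]_d :=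
  \matrix_(i < d, j < d) (wv v (lift ord0 i) 0 j - wv v ord0 0 j).
Definition cco d (v : 'I_d.+1 -> 'rV[int]_d) (y : 'rV[rat]_d) (k : rat) : 'rV[rat]_d :=
  (y - k *: wv v ord0) *m invmx (Aq v).
Definition mu d (v : 'I_d.+1 -> 'rV[int]_d) y k (i : 'I_d.+1) : rat :=
  match unlift ord0 i with Some j => cco v y k 0 j | None => k - \sum_j cco v y k 0 j end.

Lemma Aq_unit d (v : 'I_d.+1 -> 'rV[int]_d) : full_dim_simplex v -> Aq v \in unitmx.
Proof.
rewrite /full_dim_simplex => H.
have -> : Aq v = map_mx intr (\matrix_(i < d, j < d) (v (lift ord0 i) 0 j - v ord0 0 j)).
  by apply/matrixP => i j; rewrite /Aq /wv /intvec !mxE rmorphB.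
by rewrite unitmxE det_map_mx unitfE intr_eq0.
Qed.

Lemma row_Aq d (v : 'I_d.+1 -> 'rV[int]_d) (c : 'rV[rat]_d) :
  c *m Aq v = \sum_j c 0 j *: (wv v (lift ord0 j) - wv v ord0).
Proof.
rewrite mulmx_sum_row; apply: eq_bigr => j _; congr (_ *: _).
by apply/rowP => k; rewrite !mxE.
Qed.

Lemma sum_decomp d (v : 'I_d.+1 -> 'rV[int]_d) (lam : 'I_d.+1 -> rat) :
  \sum_i lam i *: wv v i = (\sum_i lam i) *: wv v ord0 + (\row_j lam (lift ord0 j)) *m Aq v.
Proof.
rewrite row_Aq !big_ord_recl /=.
under [X in _ = _ + X]eq_bigr => j _ do rewrite mxE scalerBr.
rewrite sumrB scalerDl -scaler_suml.
set a := \sum_(i < d) _ *: wv v (lift ord0 i).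
set b := (\sum_(i < d) lam (lift ord0 i)) *: wv v ord0.
by rewrite -addrA [b + _]addrC subrK.
Qed.

Lemma mu_sum d (v : 'I_d.+1 -> 'rV[int]_d) y k : \sum_i mu v y k i = k.
Proof.
rewrite big_ord_recl /mu unlift_none.
under [X in _ + X]eq_bigr => j _ do rewrite liftK.
by rewrite subrK.
Qed.

Lemma mu_comb d (v : 'I_d.+1 -> 'rV[int]_d) y k : Aq v \in unitmx ->
  \sum_i mu v y k i *: wv v i = y.
Proof.
move=> hA; rewrite sum_decomp mu_sum.
have -> : \row_j mu v y k (lift ord0 j) = cco v y k.
  by apply/rowP => j; rewrite mxE /mu liftK.
by rewrite /cco mulmxKV // addrC subrK.
Qed.

Lemma mu_uniq d (v : 'I_d.+1 -> 'rV[int]_d) y k (lam : 'I_d.+1 -> rat) :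
  Aq v \in unitmx -> \sum_i lam i = k -> \sum_i lam i *: wv v i = y ->
  forall i, lam i = mu v y k i.
Proof.
move=> hA hs hy.
have hr : \row_j lam (lift ord0 j) = cco v y k.
  rewrite /cco -hy sum_decomp hs addrC addKr mulmxK //.
have hj : forall j, lam (lift ord0 j) = cco v y k 0 j.
  by move=> j; rewrite -hr mxE.
move=> i; rewrite /mu; case: unliftP => [j ->|->]; first exact: hj.
have <- : \sum_j lam (lift ord0 j) = \sum_j cco v y k 0 j.
  by apply: eq_bigr => j _; rewrite hj.
by rewrite -hs big_ord_recl addrK.
Qed.

Lemma in_kconvE d (v : 'I_d.+1 -> 'rV[int]_d) k y : Aq v \in unitmx ->
  in_kconv (fun i => intvec (v i)) k y <-> forall i, 0 <= mu v y k i.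
Proof.
move=> hA; split.
  by case=> lam [h0 [hs hy]] i; rewrite -(mu_uniq hA hs (esym hy)).
move=> h; exists (mu v y k); split => //; split; first exact: mu_sum.
by rewrite (mu_comb _ _ hA).
Qed.


Lemma mu_shift d (v : 'I_d.+1 -> 'rV[int]_d) y k (S : {set 'I_d.+1}) : Aq v \in unitmx ->
  forall i, mu v (y + \sum_(s in S) wv v s) (k + #|S|%:R) i = mu v y k i + (i \in S)%:R.
Proof.
move=> hA i; symmetry; apply: (mu_uniq hA (lam := fun i => mu v y k i + (i \in S)%:R)).
  rewrite big_split /= mu_sum; congr (_ + _).
  rewrite -sum1_card natr_sum [RHS]big_mkcond /=; apply: eq_bigr => j _.
  by case: (j \in S).
under eq_bigr => j _ do rewrite scalerDl.
rewrite big_split /= mu_comb //; congr (_ + _).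
rewrite [in RHS]big_mkcond /=; apply: eq_bigr => j _.
by case: (j \in S); rewrite ?scale1r ?scale0r.
Qed.

Lemma decideP (P : Prop) : decide P = true <-> P.
Proof. by rewrite /decide; case: excluded_middle_informative. Qed.

Lemma box_emb_inj d B : injective (@box_emb d B).
Proof.
move=> x x' h; apply/rowP => j; have := congr1 (fun z : 'rV[int]_d => z 0 j) h.
rewrite /box_emb !mxE => /addIr /eqP; rewrite eqz_nat => /eqP; exact: val_inj.
Qed.

Lemma vbound_ge d (v : 'I_d.+1 -> 'rV[int]_d) i j : (absz (v i 0%R j) <= vbound v)%N.
Proof.
rewrite /vbound; apply: (bigop.bigmax_sup i) => //; apply: (bigop.bigmax_sup j) => //.
Qed.

Lemma in_kP_bound d (v : 'I_d.+1 -> 'rV[int]_d) k y :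
  in_kP v k y -> forall j, (absz (y 0%R j) <= k * vbound v)%N.
Proof.
case=> lam [h0 [hs hy]] j.
have e : (y 0 j)%:~R = \sum_i lam i * (v i 0 j)%:~R :> rat.
  have := congr1 (fun z : 'rV[rat]_d => z 0 j) hy; rewrite /intvec mxE /= => ->.
  by rewrite summxE; apply: eq_bigr => i _; rewrite !mxE.
rewrite -(ler_nat rat) natr_absz intr_norm e natrM.
apply: le_trans (ler_norm_sum _ _ _) _.
rewrite -hs mulr_suml; apply: ler_sum => i _.
rewrite normrM (ger0_norm (h0 i)) ler_wpM2l // -intr_norm -natr_absz ler_nat.
exact: vbound_ge.
Qed.

Definition pts d (v : 'I_d.+1 -> 'rV[int]_d) k : seq 'rV[int]_d :=
  [seq box_emb x | x <- enum [pred x : 'rV['I_((k * vbound v).*2).+1]_d |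
                                decide (in_kP v k (box_emb x))]].

Lemma size_pts d (v : 'I_d.+1 -> 'rV[int]_d) k : size (pts v k) = ehrhart v k.
Proof. by rewrite size_map -cardE. Qed.

Lemma uniq_pts d (v : 'I_d.+1 -> 'rV[int]_d) k : uniq (pts v k).
Proof. by rewrite map_inj_uniq ?enum_uniq //; exact: box_emb_inj. Qed.

Lemma box_surj d B (y : 'rV[int]_d) : (forall j, absz (y 0%R j) <= B)%N ->
  exists x, y = @box_emb d B x.
Proof.
move=> hb; exists (\row_j (inord (absz (y 0 j + B%:Z)) : 'I_(B.*2).+1)).
apply/rowP => j; rewrite /box_emb !mxE inordK.
  have := hb j; lia.
have := hb j; lia.
Qed.

Lemma mem_pts d (v : 'I_d.+1 -> 'rV[int]_d) k y : y \in pts v k <-> in_kP v k y.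
Proof.
split.
  by case/mapP => x; rewrite mem_enum inE => /decideP h ->.
move=> h; have [x ex] := box_surj (in_kP_bound h).
by rewrite ex; apply: map_f; rewrite mem_enum inE; apply/decideP; rewrite -ex.
Qed.

Lemma intvecD d (a b : 'rV[int]_d) : intvec (a + b) = intvec a + intvec b.
Proof. by apply/rowP => j; rewrite !mxE rmorphD. Qed.

Lemma intvec_sum d (I : finType) (P : pred I) (F : I -> 'rV[int]_d) :
  intvec (\sum_(i | P i) F i) = \sum_(i | P i) intvec (F i).
Proof.
apply/rowP => j; rewrite /intvec mxE !summxE rmorph_sum; apply: eq_bigr => i _.
by rewrite mxE.
Qed.

Lemma in_kPE d (v : 'I_d.+1 -> 'rV[int]_d) k y : Aq v \in unitmx ->
  in_kP v k y <-> forall i, 0 <= mu v (intvec y) k%:R i.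
Proof. move=> hA; exact: in_kconvE. Qed.

Definition Tset d (v : 'I_d.+1 -> 'rV[int]_d) H (p : 'rV[int]_d) : {set 'I_d.+1} :=
  [set i | 1 <= mu v (intvec p) H%:R i].

Definition vsum d (v : 'I_d.+1 -> 'rV[int]_d) (S : {set 'I_d.+1}) : 'rV[int]_d :=
  \sum_(s in S) v s.

Lemma mu_vsum d (v : 'I_d.+1 -> 'rV[int]_d) H (S : {set 'I_d.+1}) y : Aq v \in unitmx -> (#|S| <= H)%N ->
  forall i, mu v (intvec (y + vsum v S)) H%:R i = mu v (intvec y) (H - #|S|)%:R i + (i \in S)%:R.
Proof.
move=> hA hS i; rewrite -(mu_shift _ _ _ hA) intvecD /vsum intvec_sum -natrD subnK //.
Qed.

Lemma count_shift d (v : 'I_d.+1 -> 'rV[int]_d) H (S : {set 'I_d.+1}) : Aq v \in unitmx -> (#|S| <= H)%N ->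
  ehrhart v (H - #|S|) = count (fun p => S \subset Tset v H p) (pts v H).
Proof.
move=> hA hS; rewrite -size_pts -size_filter -(size_map (fun y => y + vsum v S)).
apply: perm_size; apply: uniq_perm.
- by rewrite map_inj_uniq ?uniq_pts //; exact: addIr.
- by rewrite filter_uniq ?uniq_pts.
move=> z; apply/idP/idP.
  case/mapP => y /mem_pts /(in_kPE _ _ hA) hy ->.
  rewrite mem_filter; apply/andP; split.
    apply/subsetP => i iS; rewrite inE mu_vsum // iS lerDr; exact: hy.
  apply/mem_pts/(in_kPE _ _ hA) => i; rewrite mu_vsum //; apply: addr_ge0 => //.
rewrite mem_filter => /andP [/subsetP hsub /mem_pts /(in_kPE _ _ hA) hz].
apply/mapP; exists (z - vsum v S); last by rewrite subrK.
apply/mem_pts/(in_kPE _ _ hA) => i.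
have := mu_vsum (z - vsum v S) hA hS i; rewrite subrK => e.
have -> : mu v (intvec (z - vsum v S)) (H - #|S|)%:R i = mu v (intvec z) H%:R i - (i \in S)%:R
  by rewrite e addrK.
case: (boolP (i \in S)) => iS /=.
  by rewrite subr_ge0; have := hsub i iS; rewrite inE.
by rewrite subr0.
Qed.

Lemma alt_subsets (I : finType) (X : {set I}) :
  \sum_(S : {set I} | S \subset X) (-1) ^+ #|S| = (X == set0)%:R :> int.
Proof.
case: (set_0Vmem X) => [->|[x xX]].
  rewrite eqxx (big_pred1 set0) ?cards0 // => S; by rewrite subset0.
have xX0 : (X == set0) = false by apply/negbTE/set0Pn; exists x.
rewrite xX0.
pose h (S : {set I}) := if x \in S then S :\ x else x |: S.
have hK : involutive h.
  move=> S; rewrite /h; case: (boolP (x \in S)) => xS.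
    by rewrite setD11 setD1K.
  by rewrite setU11 setU1K.
have hsub : forall S, (h S \subset X) = (S \subset X).
  move=> S; rewrite /h; case: (boolP (x \in S)) => xS.
    have e : x |: X = X by apply/setUidPr; rewrite sub1set.
    by rewrite subDset e.
  by rewrite subUset sub1set xX.
have hsg : forall S, (-1) ^+ #|h S| = - (-1) ^+ #|S| :> int.
  move=> S; rewrite /h; case: (boolP (x \in S)) => xS.
    by rewrite (cardsD1 x S) xS add1n exprS mulN1r opprK.
  by rewrite cardsU1 xS add1n exprS mulN1r.
set s := \sum_(S | _) _.
have : s = - s.
  rewrite {1}/s (reindex_inj (inv_inj hK)) /= /s -sumrN.
  by apply: eq_big => S; rewrite ?hsub ?hsg.
move/eqP; rewrite -subr_eq0 opprK -mulr2n mulrn_eq0 /= => /eqP ->.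
done.
Qed.

Lemma count_big (T : Type) (a : pred T) (s : seq T) : count a s = (\sum_(x <- s) a x)%N.
Proof. by elim: s => [|x s IH]; rewrite ?big_nil ?big_cons //= IH. Qed.

Lemma Tset_card d (v : 'I_d.+1 -> 'rV[int]_d) H p : Aq v \in unitmx -> in_kP v H p ->
  (#|Tset v H p| <= H)%N.
Proof.
move=> hA /(in_kPE _ _ hA) h.
rewrite -(ler_nat rat) -sum1_card natr_sum -[X in _ <= X](mu_sum v (intvec p) H%:R).
rewrite [X in _ <= X](bigID (fun i => i \in Tset v H p)) /= -[X in X <= _]addr0.
apply: lerD; last by apply: sumr_ge0 => i _; exact: h.
by apply: ler_sum => i; rewrite inE.
Qed.

Lemma hstar_count d (v : 'I_d.+1 -> 'rV[int]_d) H : Aq v \in unitmx ->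
  hstar_coef v H = (count (fun p => Tset v H p == set0) (pts v H))%:Z.
Proof.
move=> hA; rewrite /hstar_coef.
have stepA : forall i : 'I_H.+1, (-1) ^+ i * ('C(d.+1, i))%:Z * (ehrhart v (H - i))%:Z =
    \sum_(S : {set 'I_d.+1} | #|S| == i) (-1) ^+ #|S| * (ehrhart v (H - #|S|))%:Z.
  move=> i; rewrite (eq_bigr (fun _ => (-1) ^+ i * (ehrhart v (H - i))%:Z)); last first.
    by move=> S /eqP ->.
  rewrite sumr_const.
  have -> : #|(fun S : {set 'I_d.+1} => #|S| == i)| = 'C(d.+1, i).
    by have := card_draws 'I_d.+1 i; rewrite card_ord => <-; apply: eq_card => S; rewrite inE.
  by rewrite -mulr_natr natz; ring.
rewrite (eq_bigr _ (fun i _ => stepA i)).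
set F := fun S : {set 'I_d.+1} => (-1) ^+ #|S| * (ehrhart v (H - #|S|))%:Z.
have -> : \sum_(i < H.+1) \sum_(S : {set 'I_d.+1} | #|S| == i) F S =
          \sum_(S : {set 'I_d.+1} | (#|S| <= H)%N) F S.
  rewrite (partition_big (fun X : {set 'I_d.+1} => (inord #|X| : 'I_H.+1)) xpredT
   (P := fun X : {set 'I_d.+1} => (#|X| <= H)%N)) //=.
  apply: eq_bigr => j _; apply: eq_bigl => S.
  case: (leqP #|S| H) => hS /=.
    by rewrite -(inj_eq val_inj) /= inordK.
  apply/negbTE/eqP => e; have := ltn_ord j; by rewrite -e ltnS leqNgt hS.
rewrite /F.
under eq_bigr => S hS do rewrite (count_shift hA hS) count_big -natz natr_sum mulr_sumr.
rewrite exchange_big /= count_big -natz natr_sum.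
rewrite big_seq [RHS]big_seq; apply: eq_bigr => p /mem_pts hp.
rewrite -alt_subsets big_mkcond [RHS]big_mkcond /=; apply: eq_bigr => S _.
case: (boolP (S \subset Tset v H p)) => hs.
  rewrite (leq_trans (subset_leq_card hs) (Tset_card hA hp)) /=.
  by rewrite mulr1.
by case: ifP; rewrite ?mulr0.
Qed.

Definition good d (v : 'I_d.+1 -> 'rV[int]_d) k : Prop :=
  exists p, in_kP v k p /\ Tset v k p = set0.

Lemma Tset0P d (v : 'I_d.+1 -> 'rV[int]_d) k p :
  Tset v k p = set0 <-> forall i, mu v (intvec p) k%:R i < 1.
Proof.
split.
  move=> h i; have : i \notin Tset v k p by rewrite h inE.
  by rewrite inE -ltNge.
by move=> h; apply/setP => i; rewrite !inE leNgt h.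
Qed.

Lemma good_bound d (v : 'I_d.+1 -> 'rV[int]_d) k : good v k -> (k <= d)%N.
Proof.
case=> p [_ /Tset0P h].
rewrite -ltnS -(ltr_nat rat) -(mu_sum v (intvec p) k%:R).
have -> : (d.+1)%:R = \sum_(i < d.+1) (1 : rat) by rewrite sumr_const card_ord.
apply: ltr_sum => //; by apply/hasP; exists ord0; rewrite ?mem_index_enum.
Qed.

Lemma intvec0 d : intvec (0 : 'rV[int]_d) = 0.
Proof. by apply/rowP => j; rewrite !mxE. Qed.

Lemma good0 d (v : 'I_d.+1 -> 'rV[int]_d) : Aq v \in unitmx -> good v 0.
Proof.
move=> hA.
have hm : forall i, mu v (intvec 0) 0%:R i = 0.
  move=> i; symmetry; apply: (mu_uniq hA (lam := fun _ => 0)).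
    by rewrite big1.
  by rewrite intvec0 big1 // => j _; rewrite scale0r.
exists 0; split.
  by apply/(in_kPE _ _ hA) => i; rewrite hm.
by apply/Tset0P => i; rewrite hm.
Qed.


Lemma vsum1 d (v : 'I_d.+1 -> 'rV[int]_d) i : vsum v [set i] = v i.
Proof. by rewrite /vsum big_set1. Qed.

Lemma mu_step d (v : 'I_d.+1 -> 'rV[int]_d) k x i : Aq v \in unitmx ->
  forall j, mu v (intvec (x + v i)) k.+1%:R j = mu v (intvec x) k%:R j + (j \in [set i])%:R.
Proof.
move=> hA j; have h1 : (#|[set i]| <= k.+1)%N by rewrite cards1.
by rewrite -(vsum1 v i) (mu_vsum _ hA h1) cards1 subn1.
Qed.

Lemma gen_H d (v : 'I_d.+1 -> 'rV[int]_d) H : Aq v \in unitmx ->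
  (forall k, good v k -> (k <= H)%N) -> gen_from v H.
Proof.
move=> hA hmax k hk y; split; last first.
  case=> i [x [hx ->]]; apply/(in_kPE _ _ hA) => j.
  rewrite addrC mu_step //; apply: addr_ge0; first exact: (proj1 (in_kPE _ _ hA) hx).
  by case: (j \in [set i]).
move=> hy; have hy' := proj1 (in_kPE _ _ hA) hy.
case: (set_0Vmem (Tset v k.+1 y)) => [e|[i hi]].
  have := hmax _ (ex_intro _ y (conj hy e)); lia.
exists i, (y - v i); split; last by rewrite addrC subrK.
apply/(in_kPE _ _ hA) => j.
have := mu_step k (y - v i) i hA j; rewrite subrK => e.
have -> : mu v (intvec (y - v i)) k%:R j = mu v (intvec y) k.+1%:R j - (j \in [set i])%:R
  by rewrite e addrK.
rewrite inE; case: (boolP (j == i)) => [/eqP ->|_] /=.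
  by rewrite subr_ge0; move: hi; rewrite inE.
by rewrite subr0.
Qed.

Lemma intvecN d (a : 'rV[int]_d) : intvec (- a) = - intvec a.
Proof. by apply/rowP => j; rewrite !mxE rmorphN. Qed.

Lemma mu_integral d (v : 'I_d.+1 -> 'rV[int]_d) : Aq v \in unitmx ->
  (forall k, good v k -> k = 0%N) ->
  forall (z : 'rV[int]_d) i, mu v (intvec z) 0%:R i = (Num.floor (mu v (intvec z) 0%:R i))%:~R.
Proof.
move=> hA h0 z.
set m := mu v (intvec z) 0%:R.
pose fl i := Num.floor (m i).
pose f i := m i - (fl i)%:~R.
have hf0 : forall i, 0 <= f i by move=> i; rewrite subr_ge0 floor_le.
have hf1 : forall i, f i < 1.
  by move=> i; rewrite ltrBlDr -[1]/(1%:~R) -intrD -floor_lt_int addrC ltzD1.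
have hsum : \sum_i f i = (- \sum_i fl i)%:~R.
  by rewrite sumrB mu_sum rmorphN rmorph_sum sub0r.
pose z' := z - \sum_i fl i *: v i.
have hcomb : \sum_i f i *: wv v i = intvec z'.
  under eq_bigr => k0 _ do rewrite scalerBl.
  rewrite sumrB mu_comb // /z' intvecD intvecN intvec_sum; congr (_ - _).
  apply: eq_bigr => i _; apply/rowP => j.
  by rewrite !mxE rmorphM.
have hn : exists n : nat, - \sum_i fl i = n%:Z.
  exists `|- \sum_i fl i|%N; rewrite gez0_abs // -(ler0z rat) -hsum.
  exact: sumr_ge0.
case: hn => n hn; rewrite hn in hsum.
have hmu : forall i, f i = mu v (intvec z') n%:R i.
  exact: (mu_uniq hA hsum hcomb).
have hg : good v n.
  exists z'; split.
    by apply/(in_kPE _ _ hA) => i; rewrite -hmu.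
  by apply/Tset0P => i; rewrite -hmu.
have := h0 _ hg => n0; rewrite n0 in hsum.
have hz := psumr_eq0P (P := xpredT) (fun i _ => hf0 i) hsum.
move=> i; have : f i = 0 by apply: hz.
by move/eqP; rewrite subr_eq0 => /eqP.
Qed.

Lemma Aq_map d (v : 'I_d.+1 -> 'rV[int]_d) :
  Aq v = map_mx intr (\matrix_(i < d, j < d) (v (lift ord0 i) 0 j - v ord0 0 j)).
Proof. by apply/matrixP => i j; rewrite /Aq /wv /intvec !mxE rmorphB. Qed.

Lemma unimod_case d (v : 'I_d.+1 -> 'rV[int]_d) : Aq v \in unitmx ->
  (forall k, good v k -> k = 0%N) -> unimod_equiv (simplexP v) (@std_simplex d).
Proof.
move=> hA h0.
set Cq := invmx (Aq v).
have hCq : forall j l, Cq j l = (Num.floor (Cq j l))%:~R.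
  move=> j l.
  have e : Cq j l = mu v (intvec 'e_j) 0%:R (lift ord0 l).
    rewrite /mu liftK /cco scale0r subr0.
    have -> : intvec ('e_j : 'rV[int]_d) = 'e_j.
      by apply/rowP => k; rewrite !mxE; case: (_ && _).
    by rewrite -rowE mxE.
  by rewrite e; apply: mu_integral.
set Aint := \matrix_(i < d, j < d) (v (lift ord0 i) 0 j - v ord0 0 j).
pose C : 'M[int]_d := \matrix_(j, l) Num.floor (Cq j l).
have hC : map_mx intr C = Cq by apply/matrixP => j l; rewrite !mxE -hCq.
have hCA : C *m Aint = 1%:M.
  have e : map_mx intr (C *m Aint) = map_mx intr (1%:M : 'M[int]_d) :> 'M[rat]_d.
    by rewrite map_mxM hC -Aq_map map_mx1 mulVmx.
  apply/matrixP => i j; apply: (@intr_inj rat).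
  by have := congr1 (fun M : 'M[rat]_d => M i j) e; rewrite !mxE.
pose t : 'rV[int]_d := - (v ord0 *m C).
have affE : forall x, aff_map C t x = (x - wv v ord0) *m Cq.
  move=> x; rewrite /aff_map /t /intvec map_mxN map_mxM hC mulmxBl.
  by [].
have hvert : forall i, aff_map C t (wv v i) = std_vert i.
  move=> i; rewrite affE; case: (unliftP ord0 i) => [j ->|->].
    have -> : wv v (lift ord0 j) - wv v ord0 = row j (Aq v).
      by apply/rowP => l; rewrite !mxE.
    rewrite -row_mul mulmxV // row1; apply/rowP => l; rewrite !mxE lift0 eqSS.
    rewrite eqxx /= eq_sym; have [->|h] := eqVneq j l; first by rewrite !eqxx.
    have h' : (j : nat) != l by [].
    have h2 : (l == j) = false by rewrite eq_sym (negbTE h).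
    by rewrite ?h2 ?(negbTE h) (negbTE h').
  by rewrite addrN mul0mx; apply/rowP => l; rewrite !mxE.
have haff : forall lam : 'I_d.+1 -> rat, \sum_i lam i = 1 ->
    aff_map C t (\sum_i lam i *: wv v i) = \sum_i lam i *: std_vert i.
  move=> lam hs; rewrite affE.
  have -> : \sum_i lam i *: wv v i - wv v ord0 = \sum_i lam i *: (wv v i - wv v ord0).
    by rewrite [in RHS](eq_bigr _ (fun i _ => scalerBr _ _ _)) sumrB -scaler_suml hs scale1r.
  rewrite mulmx_suml; apply: eq_bigr => i _; by rewrite -scalemxAl -affE hvert.
exists C, t; split; first exact: (mulmx1_unit hCA).1.
move=> y; split.
  case=> lam [hl0 [hs hy]]; exists (\sum_i lam i *: wv v i); split.
    by exists lam.
  by rewrite haff.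
case=> x [[lam [hl0 [hs hx]]] ->]; exists lam; split => //; split => //.
by rewrite hx haff.
Qed.

Unset Implicit Arguments.
Theorem mainTheorem3 (d : nat) (v : 'I_d.+1 -> 'rV[int]_d) :
  full_dim_simplex v ->
  ~ unimod_equiv (simplexP v) (@std_simplex d) ->
  exists n : nat, is_nu v n /\ (n <= ehrhart_deg v)%N.
Proof.
move=> hfd hnu; have hA := Aq_unit hfd.
have exP : exists k, decide (good v k) by exists 0%N; apply/decideP; exact: good0.
have bP : forall k, decide (good v k) -> (k <= d)%N by move=> k /decideP; exact: good_bound.
case: (ex_maxnP exP bP) => H /decideP gH hmax.
have hmax' : forall k, good v k -> (k <= H)%N by move=> k gk; apply: hmax; apply/decideP.
case: (posnP H) => [H0|Hpos].
  exfalso; apply: hnu; apply: unimod_case => // k gk.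
  by have := hmax' k gk; rewrite H0; lia.
have hHd := good_bound gH.
have hcoef : hstar_coef v H != 0.
  rewrite hstar_count // -lt0n -has_count; case: gH => p [hp hT].
  by apply/hasP; exists p; [apply/mem_pts | apply/eqP].
have hdeg : (H <= ehrhart_deg v)%N.
  rewrite /ehrhart_deg; case: (ltnP H (size (hstar v))) => hs; first by lia.
  have e : (hstar v)`_H = hstar_coef v H by rewrite /hstar coef_poly ltnS hHd.
  by move: hcoef; rewrite -e nth_default ?eqxx.
have hgen := gen_H hA hmax'.
have exm : exists m, (0 < m)%N && decide (gen_from v m).
  by exists H; rewrite Hpos; apply/decideP.
case: (ex_minnP exm) => n /andP [n0 /decideP gn] hmin.
exists n; split; last first.
  apply: leq_trans hdeg; apply: hmin; rewrite Hpos; exact/decideP.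
split => //; split => // m m0 gm; apply: hmin; rewrite m0; exact/decideP.
Qed.
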